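(* Let $X$ be a countable infinite set, $\mathcal{I}$ a hereditarily meager ideal on $X$, and $\tau$ an $\mathcal{I}$-crowded topology on $X$ with $w(\tau)<\mathfrak{m}_c$. Suppose $A\subseteq X$ is $(\mathcal{I},\tau)$-crowded. Then there is a partition $A=\bigcup_{m\in\omega}A_m$ such that each $A_m$ is $(\mathcal{I},\tau)$-crowded and dense in $A$.
   Context: An ideal on $X$ is a family of subsets of $X$ closed under subsets and finite unions; all ideals are assumed proper ($X\notin\mathcal{I}$) and free (every finite subset of $X$ is in $\mathcal{I}$). $\mathcal{I}^+=\mathcal{P}(X)\setminus\mathcal{I}$. Subsets of $X$ are identified with points of $2^X$ (product topology). $\mathcal{I}$ is hereditarily meager (HM) if for every $A\in\mathcal{I}^+$, $\mathcal{I}\cap\mathcal{P}(A)$ is meager in $2^A$. A topology $\tau$ on $X$ is $\mathcal{I}$-crowded if $\tau\cap\mathcal{I}=\{\emptyset\}$. A set $A\subseteq X$ is $(\mathcal{I},\tau)$-crowded if for every $U\in\tau$, $A\cap U$ is either empty or belongs to $\mathcal{I}^+$. $\mathfrak{m}_c$ is the least cardinal $\kappa$ such that Martin's Axiom MA$(\kappa)$ for countable posets fails. $w$ denotes weight. *)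

(* Defs.v *)
From Stdlib Require Import List.
Import ListNotations.

Definition subset {X : Type} (A B : X -> Prop) : Prop := forall x, A x -> B x.
Definition inter {X : Type} (A B : X -> Prop) : X -> Prop := fun x => A x /\ B x.
Definition union {X : Type} (A B : X -> Prop) : X -> Prop := fun x => A x \/ B x.
Definition is_empty {X : Type} (A : X -> Prop) : Prop := forall x, ~ A x.
Definition finite_set {X : Type} (A : X -> Prop) : Prop :=
  exists l : list X, forall x, A x -> In x l.

Definition countably_infinite (X : Type) : Prop :=
  exists f : nat -> X, (forall m n, f m = f n -> m = n) /\ (forall x, exists n, f n = x).

Definition is_ideal {X : Type} (I : (X -> Prop) -> Prop) : Prop :=
  (forall A B, I A -> subset B A -> I B) /\
  (forall A B, I A -> I B -> I (union A B)) /\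
  ~ I (fun _ => True) /\
  (forall A, finite_set A -> I A).

(* Cantor space 2^A: points are subsets B of A.  A nonempty basic open set
   is given by two disjoint finite lists pos, neg of elements of A:
   [pos,neg] = {B subset A | pos subset B, neg disjoint from B}. *)
Definition basic_cond {X : Type} (A : X -> Prop) (pos neg : list X) : Prop :=
  (forall x, In x pos -> A x) /\ (forall x, In x neg -> A x) /\
  (forall x, In x pos -> ~ In x neg).

Definition in_cylinder {X : Type} (pos neg : list X) (B : X -> Prop) : Prop :=
  (forall x, In x pos -> B x) /\ (forall x, In x neg -> ~ B x).

Definition nowhere_dense_in_cantor {X : Type} (A : X -> Prop)
    (F : (X -> Prop) -> Prop) : Prop :=
  forall pos neg, basic_cond A pos neg ->
    exists pos' neg', basic_cond A pos' neg' /\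
      incl pos pos' /\ incl neg neg' /\
      forall B, subset B A -> in_cylinder pos' neg' B -> ~ F B.

Definition meager_in_cantor {X : Type} (A : X -> Prop)
    (F : (X -> Prop) -> Prop) : Prop :=
  exists N : nat -> (X -> Prop) -> Prop,
    (forall n, nowhere_dense_in_cantor A (N n)) /\
    (forall B, subset B A -> F B -> exists n, N n B).

Definition hereditarily_meager {X : Type} (I : (X -> Prop) -> Prop) : Prop :=
  forall A : X -> Prop, ~ I A ->
    meager_in_cantor A (fun B => subset B A /\ I B).

Definition is_topology {X : Type} (T : (X -> Prop) -> Prop) : Prop :=
  T (fun _ => False) /\ T (fun _ => True) /\
  (forall U V, T U -> T V -> T (inter U V)) /\
  (forall F : (X -> Prop) -> Prop, (forall U, F U -> T U) ->
     T (fun x => exists U, F U /\ U x)).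

Definition is_base {X J : Type} (T : (X -> Prop) -> Prop) (b : J -> X -> Prop) : Prop :=
  (forall j, T (b j)) /\
  (forall U x, T U -> U x -> exists j, b j x /\ subset (b j) U).

Definition MA_countable (K : Type) : Prop :=
  forall (P : Type) (le : P -> P -> Prop),
    (forall p, le p p) ->
    (forall p q r, le p q -> le q r -> le p r) ->
    (forall p q, le p q -> le q p -> p = q) ->
    (exists g : P -> nat, forall p q, g p = g q -> p = q) ->
    inhabited P ->
    forall D : K -> P -> Prop,
      (forall k p, exists q, le q p /\ D k q) ->
      exists G : P -> Prop,
        (exists p, G p) /\
        (forall p q, G p -> le p q -> G q) /\
        (forall p q, G p -> G q -> exists r, G r /\ le r p /\ le r q) /\
        (forall k, exists p, G p /\ D k p).

(* w(T) < m_c, where m_c = least cardinal kappa for which MA(kappa) for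
   countable posets fails.  Unfolded without cardinals:
   kappa < m_c  iff  MA(lambda) holds for every lambda <= kappa;
   and w(T) <= |J| for a base indexed by J, with equality for a minimal base. *)
Definition weight_lt_mc {X : Type} (T : (X -> Prop) -> Prop) : Prop :=
  exists (J : Type) (b : J -> X -> Prop), is_base T b /\
    forall (K : Type) (h : K -> J), (forall k k', h k = h k' -> k = k') ->
      MA_countable K.

Definition I_crowded_topology {X : Type} (I T : (X -> Prop) -> Prop) : Prop :=
  forall U, T U -> I U -> is_empty U.

Definition IT_crowded {X : Type} (I T : (X -> Prop) -> Prop) (A : X -> Prop) : Prop :=
  forall U, T U -> is_empty (inter A U) \/ ~ I (inter A U).

Definition dense_in {X : Type} (T : (X -> Prop) -> Prop) (B A : X -> Prop) : Prop :=
  forall U, T U -> (exists x, A x /\ U x) -> exists x, B x /\ U x.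

(* Main.v *)
Require Import Defs.
From Stdlib Require Import List Arith Lia Cantor ClassicalEpsilon Classical.
From mathcomp Require classical_sets.
Import ListNotations.

Section Card.
Variable J : Type.

Definition good (R : (J * nat) * J -> Prop) : Prop :=
  (forall x y y', R (x, y) -> R (x, y') -> y = y') /\
  (forall x x' y, R (x, y) -> R (x', y) -> x = x') /\
  (forall j k, (exists k' y, R ((j, k'), y)) -> exists y, R ((j, k), y)) /\
  (forall y, (exists x, R (x, y)) <-> (exists k y', R ((y, k), y'))).

Lemma good_union (F : ((J * nat) * J -> Prop) -> Prop) :
  (forall X, F X -> good X) ->
  (forall X Y, F X -> F Y -> (forall t, X t -> Y t) \/ (forall t, Y t -> X t)) ->
  good (fun t => exists2 X, F X & X t).
Proof.
  intros HF Htot.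
  assert (Hboth : forall t1 t2 X1 X2, F X1 -> F X2 -> X1 t1 -> X2 t2 ->
     exists X, F X /\ X t1 /\ X t2).
  { intros t1 t2 X1 X2 F1 F2 H1 H2. destruct (Htot X1 X2 F1 F2) as [S|S].
    - exists X2; auto.
    - exists X1; auto. }
  split; [|split; [|split]].
  - intros x y y' [X1 F1 H1] [X2 F2 H2].
    destruct (Hboth _ _ _ _ F1 F2 H1 H2) as [X [FX [A B]]].
    destruct (HF X FX) as [G _]. eauto.
  - intros x x' y [X1 F1 H1] [X2 F2 H2].
    destruct (Hboth _ _ _ _ F1 F2 H1 H2) as [X [FX [A B]]].
    destruct (HF X FX) as [_ [G _]]. eauto.
  - intros j k [k' [y [X FX H]]].
    destruct (HF X FX) as [_ [_ [G _]]].
    destruct (G j k (ex_intro _ k' (ex_intro _ y H))) as [y' Hy'].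
    exists y'; exists X; auto.
  - intros y; split.
    + intros [x [X FX H]]. destruct (HF X FX) as [_ [_ [_ G]]].
      destruct (proj1 (G y) (ex_intro _ x H)) as [k [y' Hy]].
      exists k, y'; exists X; auto.
    + intros [k [y' [X FX H]]]. destruct (HF X FX) as [_ [_ [_ G]]].
      destruct (proj2 (G y) (ex_intro _ k (ex_intro _ y' H))) as [x Hx].
      exists x; exists X; auto.
Qed.

Lemma nat_inj_of_not_finite (C : J -> Prop) :
  (forall l : list J, exists j, C j /\ ~ In j l) ->
  exists e : nat -> J, (forall a b, e a = e b -> a = b) /\ (forall a, C (e a)).
Proof.
  intros H.
  destruct (H []) as [j0 _].
  set (pick := fun l : list J => epsilon (inhabits j0) (fun j => C j /\ ~ In j l)).
  assert (Hp : forall l, C (pick l) /\ ~ In (pick l) l).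
  { intros l. unfold pick. apply epsilon_spec. apply H. }
  set (build := fix build n := match n with 0 => [] | S n => pick (build n) :: build n end).
  exists (fun n => pick (build n)).
  assert (Hin : forall m n, m < n -> In (pick (build m)) (build n)).
  { intros m n Hmn. induction n as [|n IH]; [lia|].
    simpl. destruct (Nat.eq_dec m n) as [->|Hne]; [left; reflexivity|].
    right. apply IH. lia. }
  split.
  - intros a b Hab. destruct (lt_eq_lt_dec a b) as [[Hl|Hl]|Hl]; auto.
    + exfalso. apply (proj2 (Hp (build b))). rewrite <- Hab. apply Hin; auto.
    + exfalso. apply (proj2 (Hp (build a))). rewrite Hab. apply Hin; auto.
  - intros a. apply Hp.
Qed.

Lemma card_dich : (exists h : J -> nat, forall a b, h a = h b -> a = b) \/
  (exists g : J * nat -> J, forall a b, g a = g b -> a = b).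
Proof.
  destruct (@classical_sets.Zorn_bigcup ((J*nat)*J) good) as [M [GM Mmax]].
  { intros F HF Htot. apply good_union.
    - intros X FX. apply HF. exact FX.
    - intros X Y FX FY. apply Htot; auto. }
  destruct GM as [Mfun [Minj [Mdom Mran]]].
  set (Dm := fun j => exists k y, M ((j,k),y)).
  assert (Hfin : exists l, forall j, ~ Dm j -> In j l).
  { apply NNPP; intro Hn.
    assert (H' : forall l, exists j, ~ Dm j /\ ~ In j l).
    { intros l. apply NNPP; intro H2. apply Hn. exists l. intros j Hj.
      apply NNPP; intro H3. apply H2. eauto. }
    destruct (nat_inj_of_not_finite _ H') as [e [einj eC]].
    set (M' := fun t => M t \/ exists a k, t = ((e a, k), e (to_nat (a,k)))).
    apply (Mmax M').
    - split.
      + intros t Ht; left; auto.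
      + intros Hsub. apply (eC 0).
        exists 0, (e (to_nat (0,0))). apply Hsub. right. exists 0, 0. reflexivity.
    - split; [|split; [|split]].
      + intros x y y' H1 H2.
        destruct H1 as [H1|[a [k E1]]]; destruct H2 as [H2|[a' [k' E2]]].
        * eauto.
        * injection E2 as Ex Ey. subst. exfalso. apply (eC a'). exists k', y. exact H1.
        * injection E1 as Ex Ey. subst. exfalso. apply (eC a). exists k, y'. exact H2.
        * injection E1 as Ex Ey. injection E2 as Ex' Ey'. subst.
          injection Ex' as Ea Ek. apply einj in Ea. subst. reflexivity.
      + intros x x' y H1 H2.
        destruct H1 as [H1|[a [k E1]]]; destruct H2 as [H2|[a' [k' E2]]].
        * eauto.
        * injection E2 as Ex Ey. subst. exfalso.
          destruct (proj1 (Mran _) (ex_intro _ x H1)) as [kk [yy Hy]].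
          apply (eC (to_nat (a', k'))). exists kk, yy. exact Hy.
        * injection E1 as Ex Ey. subst. exfalso.
          destruct (proj1 (Mran _) (ex_intro _ x' H2)) as [kk [yy Hy]].
          apply (eC (to_nat (a, k))). exists kk, yy. exact Hy.
        * injection E1 as Ex Ey. injection E2 as Ex' Ey'. subst x x'.
          assert (Q : e (to_nat (a,k)) = e (to_nat (a',k'))) by (transitivity y; [symmetry; exact Ey| exact Ey']).
          apply einj in Q. apply (f_equal of_nat) in Q. rewrite !cancel_of_to in Q.
          injection Q as -> ->. reflexivity.
      + intros j k [k' [y [H1|[a [k0 E1]]]]].
        * destruct (Mdom j k (ex_intro _ k' (ex_intro _ y H1))) as [y' Hy'].
          exists y'. left. exact Hy'.
        * injection E1 as Ej Ek Ey. subst. exists (e (to_nat (a, k))). right.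
          exists a, k. reflexivity.
      + intros y. split.
        * intros [x [H1|[a [k E1]]]].
          -- destruct (proj1 (Mran _) (ex_intro _ x H1)) as [kk [yy Hy]].
             exists kk, yy. left. exact Hy.
          -- injection E1 as Ex Ey. subst.
             exists 0, (e (to_nat (to_nat (a,k), 0))). right.
             exists (to_nat (a,k)), 0. reflexivity.
        * intros [k [y' [H1|[a [k0 E1]]]]].
          -- destruct (proj2 (Mran _) (ex_intro _ k (ex_intro _ y' H1))) as [x Hx].
             exists x. left. exact Hx.
          -- injection E1 as Ey Ek Ey'. subst.
             destruct (of_nat a) as [a1 a2] eqn:Ea.
             exists (e a1, a2). right. exists a1, a2.
             rewrite <- Ea, cancel_to_of. reflexivity. }
  destruct Hfin as [l Hl].
  destruct (classic (exists d0, Dm d0)) as [[d0 Hd0]|Hno].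
  - right.
    set (psi := fun j k => epsilon (inhabits d0) (fun y => M((j,k),y))).
    assert (Hpsi : forall j k, Dm j -> M ((j,k), psi j k)).
    { intros j k Hj. unfold psi. apply epsilon_spec. apply Mdom. exact Hj. }
    set (idx := fun j => epsilon (inhabits 0) (fun i => nth_error l i = Some j)).
    assert (Hidx : forall j, ~ Dm j -> nth_error l (idx j) = Some j).
    { intros j Hj. unfold idx. apply epsilon_spec. apply In_nth_error. auto. }
    exists (fun p : J * nat => let (j,k) := p in
      if excluded_middle_informative (Dm j) then psi j (2*k+1)
      else psi d0 (2 * to_nat (idx j, k))).
    intros [j k] [j' k'].
    destruct (excluded_middle_informative (Dm j)) as [D1|D1];
    destruct (excluded_middle_informative (Dm j')) as [D2|D2]; intros E.
    + pose proof (Hpsi j (2*k+1) D1) as P1. pose proof (Hpsi j' (2*k'+1) D2) as P2.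
      rewrite E in P1. pose proof (Minj _ _ _ P1 P2) as Q. injection Q as -> Q.
      f_equal. lia.
    + pose proof (Hpsi j (2*k+1) D1) as P1. pose proof (Hpsi d0 (2 * to_nat (idx j', k')) Hd0) as P2.
      rewrite E in P1. pose proof (Minj _ _ _ P1 P2) as Q. apply (f_equal snd) in Q; cbn [snd] in Q. lia.
    + pose proof (Hpsi d0 (2 * to_nat (idx j, k)) Hd0) as P1. pose proof (Hpsi j' (2*k'+1) D2) as P2.
      rewrite E in P1. pose proof (Minj _ _ _ P1 P2) as Q. apply (f_equal snd) in Q; cbn [snd] in Q. lia.
    + pose proof (Hpsi d0 (2 * to_nat (idx j, k)) Hd0) as P1.
      pose proof (Hpsi d0 (2 * to_nat (idx j', k')) Hd0) as P2.
      rewrite E in P1. pose proof (Minj _ _ _ P1 P2) as Q. apply (f_equal snd) in Q; cbn [snd] in Q.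
      assert (Q2 : to_nat (idx j, k) = to_nat (idx j', k')) by lia.
      apply (f_equal of_nat) in Q2. rewrite !cancel_of_to in Q2.
      injection Q2 as Q3 ->.
      pose proof (Hidx j D1) as R1. pose proof (Hidx j' D2) as R2.
      rewrite Q3, R2 in R1. injection R1 as ->. reflexivity.
  - left. exists (fun j => epsilon (inhabits 0) (fun i => nth_error l i = Some j)).
    intros a b E.
    assert (Ha : nth_error l (epsilon (inhabits 0) (fun i => nth_error l i = Some a)) = Some a).
    { apply epsilon_spec. apply In_nth_error. apply Hl. intro; apply Hno; eauto. }
    assert (Hb : nth_error l (epsilon (inhabits 0) (fun i => nth_error l i = Some b)) = Some b).
    { apply epsilon_spec. apply In_nth_error. apply Hl. intro; apply Hno; eauto. }
    rewrite E, Hb in Ha. injection Ha as ->. reflexivity.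
Qed.

End Card.

Lemma RS (P K : Type) (le : P -> P -> Prop) (c : K -> nat) :
  (forall k k', c k = c k' -> k = k') ->
  (forall p, le p p) -> (forall p q r, le p q -> le q r -> le p r) -> inhabited P ->
  forall D : K -> P -> Prop, (forall k p, exists q, le q p /\ D k q) ->
  exists G : P -> Prop, (exists p, G p) /\ (forall p q, G p -> le p q -> G q) /\
    (forall p q, G p -> G q -> exists r, G r /\ le r p /\ le r q) /\
    (forall k, exists p, G p /\ D k p).
Proof.
  intros cinj Hr Ht [p0] D HD.
  set (step := fun n p => epsilon (inhabits p) (fun q => le q p /\ forall k, c k = n -> D k q)).
  assert (Hs : forall n p, le (step n p) p /\ forall k, c k = n -> D k (step n p)).
  { intros n p. unfold step. apply epsilon_spec.
    destruct (classic (exists k, c k = n)) as [[k Hk]|Hn].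
    - destruct (HD k p) as [q [Hq1 Hq2]]. exists q. split; auto.
      intros k' Hk'. assert (k' = k) by (apply cinj; congruence). subst; auto.
    - exists p. split; auto. intros k Hk; exfalso; eauto. }
  set (s := fix s n := match n with 0 => p0 | S n => step n (s n) end).
  assert (Hmono : forall n m, n <= m -> le (s m) (s n)).
  { intros n m H. induction H; auto. eapply Ht; [|exact IHle]. apply Hs. }
  exists (fun p => exists n, le (s n) p). split; [|split;[|split]].
  - exists p0, 0. apply Hr.
  - intros p q [n Hn] Hpq. exists n. eauto.
  - intros p q [n Hn] [m Hm]. exists (s (max n m)). split. exists (max n m); auto.
    split.
    + apply (Ht _ (s n)); [apply Hmono; lia| exact Hn].
    + apply (Ht _ (s m)); [apply Hmono; lia| exact Hm].
  - intros k. exists (s (S (c k))). split. exists (S (c k)); auto. apply Hs. reflexivity.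
Qed.

Definition lle (q p : list nat) : Prop := exists r, q = p ++ r.

Fixpoint enc (l : list nat) : nat :=
  match l with [] => 0 | x :: l => S (to_nat (x, enc l)) end.

Lemma enc_inj : forall a b, enc a = enc b -> a = b.
Proof.
  induction a as [|x a IH]; intros [|y b] H; cbn [enc] in H; try discriminate; auto.
  apply (f_equal pred) in H. cbn [pred] in H.
  apply (f_equal of_nat) in H. rewrite !cancel_of_to in H.
  injection H as -> H. f_equal. auto.
Qed.

Lemma lle_nth : forall q p i v, lle q p -> nth_error p i = Some v -> nth_error q i = Some v.
Proof.
  intros q p i v [r ->] H. rewrite nth_error_app1; auto.
  apply nth_error_Some. congruence.
Qed.

Lemma generic_exists (J : Type) (D : J * nat -> list nat -> Prop) :
  (forall (K : Type) (h : K -> J), (forall k k', h k = h k' -> k = k') -> MA_countable K) ->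
  (forall k p, exists q, lle q p /\ D k q) ->
  exists G : list nat -> Prop,
    (forall p q, G p -> G q -> exists r, G r /\ lle r p /\ lle r q) /\
    (forall k, exists p, G p /\ D k p).
Proof.
  intros HMA HD.
  assert (Hr : forall p, lle p p) by (intros p; exists []; rewrite app_nil_r; auto).
  assert (Ht : forall p q r, lle p q -> lle q r -> lle p r).
  { intros p q r [a ->] [b ->]. exists (b ++ a). rewrite app_assoc. auto. }
  destruct (card_dich J) as [[h hinj]|[g ginj]].
  - destruct (RS (list nat) (J * nat) lle (fun jt => to_nat (h (fst jt), snd jt)))
      with (D := D) as [G [_ [_ [H1 H2]]]]; auto.
    + intros [j t] [j' t'] E. cbn [fst snd] in E. apply (f_equal of_nat) in E.
      rewrite !cancel_of_to in E. injection E as E ->. apply hinj in E. subst. auto.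
    + constructor. exact [].
    + exists G; auto.
  - destruct (HMA (prod J nat) g ginj (list nat) lle Hr Ht) with (D := D)
      as [G [_ [_ [H1 H2]]]]; auto.
    + intros p q [a ->] [b E]. rewrite <- app_assoc in E.
      assert (E2 : a ++ b = []).
      { apply (f_equal (@length nat)) in E. rewrite !length_app in E.
        apply length_zero_iff_nil. rewrite length_app. lia. }
      apply app_eq_nil in E2. destruct E2 as [-> _]. rewrite app_nil_r; auto.
    + exists enc. exact enc_inj.
    + constructor. exact [].
    + exists G; auto.
Qed.

Definition bnd {X} (inv : X -> nat) (l : list X) : nat :=
  fold_right (fun x acc => max (S (inv x)) acc) 0 l.

Lemma bnd_spec {X} (inv : X -> nat) l x : In x l -> inv x < bnd inv l.
Proof.
  unfold bnd in *; induction l as [|y l IH]; cbn [fold_right In]; [tauto|]. intros [->|H]; [lia|]. specialize (IH H). lia.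
Qed.

Lemma density (X : Type) (fX : nat -> X) (inv : X -> nat)
  (Hinv : forall x, fX (inv x) = x) (fXinj : forall a b, fX a = fX b -> a = b)
  (Cj : X -> Prop) (N : (X -> Prop) -> Prop) (m : nat) :
  nowhere_dense_in_cantor Cj N ->
  forall s, exists s', lle s' s /\ forall B, subset B Cj ->
    (forall i v, nth_error s' i = Some v -> Cj (fX i) -> (B (fX i) <-> v = m)) -> ~ N B.
Proof.
  intros HN s.
  set (pos := map fX (filter (fun i => if excluded_middle_informative (Cj (fX i) /\ nth i s 0 = m) then true else false) (seq 0 (length s)))).
  set (neg := map fX (filter (fun i => if excluded_middle_informative (Cj (fX i) /\ nth i s 0 <> m) then true else false) (seq 0 (length s)))).
  assert (Hpos : forall x, In x pos <-> exists i, x = fX i /\ i < length s /\ Cj (fX i) /\ nth i s 0 = m).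
  { intros x. unfold pos. rewrite in_map_iff. split.
    - intros [i [<- Hi]]. apply filter_In in Hi. destruct Hi as [Hi1 Hi2].
      apply in_seq in Hi1.
      destruct (excluded_middle_informative _) as [Q|Q]; [|discriminate].
      exists i. intuition.
    - intros [i [-> [H1 H2]]]. exists i. split; auto. apply filter_In. split.
      + apply in_seq. lia.
      + destruct (excluded_middle_informative _) as [Q|Q]; auto. }
  assert (Hneg : forall x, In x neg <-> exists i, x = fX i /\ i < length s /\ Cj (fX i) /\ nth i s 0 <> m).
  { intros x. unfold neg. rewrite in_map_iff. split.
    - intros [i [<- Hi]]. apply filter_In in Hi. destruct Hi as [Hi1 Hi2].
      apply in_seq in Hi1.
      destruct (excluded_middle_informative _) as [Q|Q]; [|discriminate].
      exists i. intuition.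
    - intros [i [-> [H1 H2]]]. exists i. split; auto. apply filter_In. split.
      + apply in_seq. lia.
      + destruct (excluded_middle_informative _) as [Q|Q]; auto. }
  assert (Hbc : basic_cond Cj pos neg).
  { split; [|split].
    - intros x Hx. apply Hpos in Hx. destruct Hx as [i [-> H]]. tauto.
    - intros x Hx. apply Hneg in Hx. destruct Hx as [i [-> H]]. tauto.
    - intros x Hx Hx'. apply Hpos in Hx. apply Hneg in Hx'.
      destruct Hx as [i [-> [_ [_ E1]]]]. destruct Hx' as [i' [E [_ [_ E2]]]].
      apply fXinj in E. subst. auto. }
  destruct (HN pos neg Hbc) as [pos' [neg' [[Hp1 [Hn1 Hdisj]] [Hinc1 [Hinc2 Hprop]]]]].
  set (L := bnd inv (pos' ++ neg')).
  set (g := fun i => if excluded_middle_informative (In (fX i) pos') then m else S m).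
  set (s' := s ++ map g (seq (length s) (L - length s))).
  assert (Hs' : forall i, i < L -> length s <= i -> nth_error s' i = Some (g i)).
  { intros i H1 H2. unfold s'. rewrite nth_error_app2 by lia.
    rewrite nth_error_map, nth_error_seq.
    destruct (Nat.ltb_spec (i - length s) (L - length s)); [|lia].
    simpl. f_equal. f_equal. lia. }
  assert (Hs1 : forall i, i < length s -> nth_error s' i = Some (nth i s 0)).
  { intros i H. unfold s'. rewrite nth_error_app1 by lia. apply nth_error_nth'. auto. }
  exists s'. split; [exists (map g (seq (length s) (L - length s))); reflexivity|].
  intros B HB Hcons. apply Hprop; auto. split.
  - intros x Hx. assert (Hl : inv x < L) by (apply bnd_spec, in_or_app; auto).
    assert (Cx : Cj x) by auto.
    rewrite <- (Hinv x) in Cx |- *.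
    destruct (Nat.lt_ge_cases (inv x) (length s)) as [Hi|Hi].
    + apply (Hcons _ (nth (inv x) s 0) (Hs1 _ Hi) Cx).
      apply NNPP; intro Hne. apply (Hdisj x Hx). apply Hinc2. apply Hneg.
      exists (inv x). rewrite Hinv in *. auto.
    + apply (Hcons _ (g (inv x)) (Hs' _ Hl Hi) Cx).
      unfold g. rewrite Hinv. destruct (excluded_middle_informative _); tauto.
  - intros x Hx. assert (Hl : inv x < L) by (apply bnd_spec, in_or_app; auto).
    assert (Cx : Cj x) by auto.
    rewrite <- (Hinv x) in Cx |- *.
    destruct (Nat.lt_ge_cases (inv x) (length s)) as [Hi|Hi].
    + rewrite (Hcons _ (nth (inv x) s 0) (Hs1 _ Hi) Cx).
      intro He. apply (Hdisj x); auto. apply Hinc1. apply Hpos.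
      exists (inv x). rewrite Hinv in *. auto.
    + rewrite (Hcons _ (g (inv x)) (Hs' _ Hl Hi) Cx).
      unfold g. rewrite Hinv. destruct (excluded_middle_informative _) as [Q|Q].
      * exfalso. apply (Hdisj x); auto.
      * lia.
Qed.

Theorem mainTheorem2 (X : Type) (I T : (X -> Prop) -> Prop) (A : X -> Prop) :
  countably_infinite X ->
  is_ideal I ->
  hereditarily_meager I ->
  is_topology T ->
  I_crowded_topology I T ->
  weight_lt_mc T ->
  IT_crowded I T A ->
  exists Am : nat -> X -> Prop,
    (forall x, A x <-> exists m, Am m x) /\
    (forall m n x, Am m x -> Am n x -> m = n) /\
    (forall m, IT_crowded I T (Am m)) /\
    (forall m, dense_in T (Am m) A).
Proof.
  intros [fX [fXinj fXsur]] HI HM _ _ [J [b [[Hb1 Hb2] HMA]]] HA.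
  destruct HI as [Idown [_ [_ Ifin]]].
  set (inv := fun x => epsilon (inhabits 0) (fun n => fX n = x)).
  assert (Hinv : forall x, fX (inv x) = x).
  { intros x. unfold inv. apply epsilon_spec. apply fXsur. }
  assert (Hinv2 : forall i, inv (fX i) = i).
  { intros i. apply fXinj. apply Hinv. }
  set (C := fun j => inter A (b j)).
  set (Nf := fun j => epsilon (inhabits (fun (_ : nat) (_ : X -> Prop) => False))
     (fun N => (forall n, nowhere_dense_in_cantor (C j) (N n)) /\
        (forall B, subset B (C j) -> subset B (C j) /\ I B -> exists n, N n B))).
  assert (HN : forall j, ~ I (C j) -> (forall n, nowhere_dense_in_cantor (C j) (Nf j n)) /\
        (forall B, subset B (C j) -> subset B (C j) /\ I B -> exists n, Nf j n B)).
  { intros j Hj. unfold Nf. apply epsilon_spec. exact (HM (C j) Hj). }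
  set (Dn := fun (kk : J * nat) (s : list nat) =>
    ~ I (C (fst kk)) -> forall B, subset B (C (fst kk)) ->
      (forall i v, nth_error s i = Some v -> C (fst kk) (fX i) ->
         (B (fX i) <-> v = fst (of_nat (snd kk)))) -> ~ Nf (fst kk) (snd (of_nat (snd kk))) B).
  destruct (generic_exists J Dn HMA) as [G [Gdir Gmeet]].
  { intros [j t] s. unfold Dn; cbn [fst snd].
    destruct (classic (I (C j))) as [Hj|Hj].
    - exists s. split; [exists []; rewrite app_nil_r; auto|]. tauto.
    - destruct (density X fX inv Hinv fXinj (C j) (Nf j (snd (of_nat t))) (fst (of_nat t))
        (proj1 (HN j Hj) _) s) as [s' [H1 H2]].
      exists s'. split; auto. }
  set (f := fun x => epsilon (inhabits 0) (fun v => exists s, G s /\ nth_error s (inv x) = Some v)).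
  assert (Hf : forall s i v, G s -> nth_error s i = Some v -> f (fX i) = v).
  { intros s i v Gs Hs.
    assert (Hex : exists v, exists s, G s /\ nth_error s (inv (fX i)) = Some v).
    { exists v, s. rewrite Hinv2. auto. }
    pose proof (epsilon_spec (inhabits 0) _ Hex) as [s2 [Gs2 Hs2]].
    fold (f (fX i)) in Hs2. rewrite Hinv2 in Hs2.
    destruct (Gdir s s2 Gs Gs2) as [r [_ [R1 R2]]].
    pose proof (lle_nth _ _ _ _ R1 Hs) as Q1. pose proof (lle_nth _ _ _ _ R2 Hs2) as Q2.
    congruence. }
  assert (Key : forall j m, ~ I (C j) -> ~ I (fun x => C j x /\ f x = m)).
  { intros j m Hj HIB.
    destruct (proj2 (HN j Hj) (fun x => C j x /\ f x = m)) as [n Hn].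
    { intros x [Hx _]; exact Hx. }
    { split; [intros x [Hx _]; exact Hx| exact HIB]. }
    destruct (Gmeet (j, to_nat (m, n))) as [s [Gs Ds]].
    unfold Dn in Ds; cbn [fst snd] in Ds. rewrite cancel_of_to in Ds. cbn [fst snd] in Ds.
    apply (Ds Hj (fun x => C j x /\ f x = m) (fun x (Hx : C j x /\ f x = m) => proj1 Hx)); auto.
    intros i v Hs Ci. rewrite (Hf s i v Gs Hs). tauto. }
  assert (Kopen : forall m U, T U -> forall x, A x -> U x ->
     exists j, ~ I (C j) /\ forall y, C j y /\ f y = m -> A y /\ f y = m /\ U y).
  { intros m U HU x Ax Ux.
    destruct (Hb2 U x HU Ux) as [j [Hbj Hsub]].
    exists j. split.
    - destruct (HA (b j) (Hb1 j)) as [Hem|Hpos]; auto.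
      exfalso. apply (Hem x). split; auto.
    - intros y [[Ay By] Fy]. auto. }
  exists (fun m x => A x /\ f x = m). split; [|split; [|split]].
  - intros x. split; [intros Ax; exists (f x); auto | intros [m [Ax _]]; auto].
  - intros m n x [_ H1] [_ H2]. congruence.
  - intros m U HU.
    destruct (classic (exists x, (A x /\ f x = m) /\ U x)) as [[x [[Ax Fx] Ux]]|Hno].
    + right. intros HIU.
      destruct (Kopen m U HU x Ax Ux) as [j [Hj Hsub]].
      apply (Key j m Hj). apply (Idown _ _ HIU).
      intros y Hy. destruct (Hsub y Hy) as [? [? ?]]. unfold inter. repeat split; auto.
    + left. intros x Hx. apply Hno. exists x. exact Hx.
  - intros m U HU [x [Ax Ux]].
    destruct (Kopen m U HU x Ax Ux) as [j [Hj Hsub]].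
    apply NNPP. intro Hno. apply (Key j m Hj). apply Ifin. exists [].
    intros y Hy. exfalso. destruct (Hsub y Hy) as [? [? ?]]. apply Hno. exists y. auto.
Qed.
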